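(* Let $p$ be a well-typed Molholes program. Then for every input stream $is=(i_0,i_1,\dots)$ of lists compatible with $\mathsf{inputs}\,p$ (i.e. each $i_j$ is a list whose $n$-th entry is a value of the $n$-th type of $\mathsf{inputs}\,p$), the stream $\mathrm{run}\,p\,(\mathrm{init}\,p)\,is$ is everywhere defined and is a stream $os$ of lists compatible with $\mathsf{outputs}\,p$.
   Context: Host language: types are sets, functions total; products; $\mathsf{Unit}=\{tt\}$. A resource of type $A$ is $\mathsf{Ref}\,A\,n$, $\mathrm{id}=n$. Molholes terms: $\mathsf{Arr}\,f:\mathsf{RSF}\,A\,B$, $\mathsf{Comp}\,t_1\,t_2:\mathsf{RSF}\,A\,C$ ($t_1:\mathsf{RSF}\,A\,B$, $t_2:\mathsf{RSF}\,B\,C$), $\mathsf{First}\,t:\mathsf{RSF}(A\times C)(B\times C)$, $\mathsf{Get}\,r:\mathsf{RSF}\,A(A\times B)$, $\mathsf{Set}\,r:\mathsf{RSF}(A\times B)A$ ($r$ of type $B$). A status is $\mathsf{Internal}$, $\mathsf{Input}\,b$ or $\mathsf{Output}\,b$; a cell is $\mathsf{Cell}(s,\tau)\,x$ with $x$ a value of $\tau$ or $\mathsf{undef}$; a memory is a partial map $\mathbb N\rightharpoonup$ cells. For $r=\mathsf{Ref}\,A\,n$: $\mathrm{read}\,r\,\sigma=(x,\sigma)$ if $\sigma n=\mathsf{Cell}(\mathsf{Internal},A)x$; $=(x,\sigma[n\mapsto\mathsf{Cell}(\mathsf{Input}\,\mathrm{false},A)\mathsf{undef}])$ if $\sigma n=\mathsf{Cell}(\mathsf{Input}\,\mathrm{true},A)x$;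 else undefined. $\mathrm{write}\,r\,\sigma\,v=\sigma[n\mapsto\mathsf{Cell}(\mathsf{Internal},A)v]$ if $\sigma n=\mathsf{Cell}(\mathsf{Internal},A)x$; $=\sigma[n\mapsto\mathsf{Cell}(\mathsf{Output}\,\mathrm{false},A)v]$ if $\sigma n=\mathsf{Cell}(\mathsf{Output}\,\mathrm{true},A)\mathsf{undef}$; else undefined. Semantics $\mathrm{step}\,t:A\to(\text{memory}\rightharpoonup B\times\text{memory})$: $\mathsf{Arr}\,f\mapsto\lambda x\sigma.(fx,\sigma)$; $\mathsf{Comp}\,t_1t_2\mapsto\lambda x\sigma.\mathrm{step}\,t_2\,y\,\sigma'$ with $(y,\sigma')=\mathrm{step}\,t_1\,x\,\sigma$; $\mathsf{First}\,t\mapsto\lambda(x,c)\sigma.((y,c),\sigma')$ with $(y,\sigma')=\mathrm{step}\,t\,x\,\sigma$; $\mathsf{Get}\,r\mapsto\lambda x\sigma.((x,y),\sigma')$ with $(y,\sigma')=\mathrm{read}\,r\,\sigma$; $\mathsf{Set}\,r\mapsto\lambda(x,y)\sigma.(x,\mathrm{write}\,r\,\sigma\,y)$ (all partial). A program $p$ consists of a list $\mathsf{inputs}\,p$ of $k_{in}$ types, a list $\mathsf{internals}\,p$ of $k$ typed values, a list $\mathsf{outputs}\,p$ of $k_{out}$ types, and $\mathsf{program}\,p:\mathsf{RSF}\,\mathsf{Unit}\,\mathsf{Unit}$; input resources have identifiers $0,\dots,k_{in}-1$, internal ones $k_{in},\dots,k_{in}+k-1$, output ones $k_{in}+k,\dots,k_{in}+k+k_{out}-1$,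 with the corresponding types. $\mathrm{init}\,p$ maps internal index $n$ to $\mathsf{Cell}(\mathsf{Internal},\tau)\,v$ where $v:\tau$ is the corresponding entry of $\mathsf{internals}\,p$, undefined elsewhere. $\mathrm{pull}\,p\,\sigma\,i$ maps input index $n$ to $\mathsf{Cell}(\mathsf{Input}\,\mathrm{true},\tau_n)\,i_n$, output index $n$ to $\mathsf{Cell}(\mathsf{Output}\,\mathrm{true},\tau)\,\mathsf{undef}$, and agrees with $\sigma$ elsewhere. $\mathrm{push}\,p\,\sigma$ is the list, in index order, of values $v$ with $\sigma\,n=\mathsf{Cell}(\mathsf{Output}\,\mathrm{false},\tau)\,v$ for output indices $n$. Corecursively, $\mathrm{run}\,p\,\sigma\,(i:is)=(\mathrm{push}\,p\,\sigma'):\mathrm{run}\,p\,\sigma'\,is$ where $(tt,\sigma')=\mathrm{step}(\mathsf{program}\,p)\,tt\,(\mathrm{pull}\,p\,\sigma\,i)$ (undefined if this step is undefined). Well-typedness: an abstract memory $\Sigma$ maps indices to pairs (status, type). For $r=\mathsf{Ref}\,A\,n$: $\mathrm{read}^\dagger r\Sigma=\Sigma$ if $\Sigma n=(\mathsf{Internal},A)$, $=\Sigma[n\mapsto(\mathsf{Input}\,\mathrm{false},A)]$ if $\Sigma n=(\mathsf{Input}\,\mathrm{true},A)$, else undefined; $\mathrm{write}^\dagger r\Sigma=\Sigma$ if $\Sigma n=(\mathsf{Internal},A)$, $=\Sigma[n\mapsto(\mathsf{Output}\,\mathrm{false},A)]$ if $\Sigma n=(\mathsf{Output}\,\mathrm{true},A)$,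 else undefined. $\mathrm{step}^\dagger(\mathsf{Arr}\,f)\Sigma=\Sigma$; $\mathrm{step}^\dagger(\mathsf{First}\,t)=\mathrm{step}^\dagger t$; $\mathrm{step}^\dagger(\mathsf{Comp}\,t_1t_2)\Sigma=\mathrm{step}^\dagger t_2(\mathrm{step}^\dagger t_1\Sigma)$; $\mathrm{step}^\dagger(\mathsf{Get}\,r)=\mathrm{read}^\dagger r$; $\mathrm{step}^\dagger(\mathsf{Set}\,r)=\mathrm{write}^\dagger r$ (partial). $\mathrm{init}^\dagger p$ assigns $(\mathsf{Input}\,\mathrm{true},\tau)$ to input indices, $(\mathsf{Output}\,\mathrm{true},\tau)$ to output indices and $(\mathsf{Internal},\tau)$ to internal indices (with the corresponding types), undefined elsewhere. $p$ is well-typed if $\mathrm{step}^\dagger(\mathsf{program}\,p)(\mathrm{init}^\dagger p)$ is defined and assigns status $\mathsf{Input}\,\mathrm{false}$ to every input index and $\mathsf{Output}\,\mathrm{false}$ to every output index. *)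

(* Defs.v *)
From Stdlib Require Import Bool List Arith Streams.
Import ListNotations.

Record Ref (A : Type) := mkRef { rid : nat }.
Arguments mkRef {A} _.
Arguments rid {A} _.

(** Molholes terms. [SetR] is the paper's [Set] (Set is a Rocq keyword). *)
Inductive RSF : Type -> Type -> Type :=
| Arr   {A B : Type} : (A -> B) -> RSF A B
| Comp  {A B C : Type} : RSF A B -> RSF B C -> RSF A C
| First {A B C : Type} : RSF A B -> RSF (A * C) (B * C)
| Get   {A B : Type} : Ref B -> RSF A (A * B)
| SetR  {A B : Type} : Ref B -> RSF (A * B) A.

Inductive status := Internal | Input (b : bool) | Output (b : bool).

(** A cell: status, type tau, and a value of tau or undef (None). *)
Record cell := Cell { cstatus : status; ctype : Type; cval : option ctype }.

Definition memory := nat -> option cell.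

Definition upd {X : Type} (m : nat -> option X) (n : nat) (c : X) : nat -> option X :=
  fun k => if Nat.eqb k n then Some c else m k.

Inductive read {A : Type} (r : Ref A) (s : memory) : A -> memory -> Prop :=
| read_internal (x : A) :
    s (rid r) = Some (Cell Internal A (Some x)) -> read r s x s
| read_input (x : A) :
    s (rid r) = Some (Cell (Input true) A (Some x)) ->
    read r s x (upd s (rid r) (Cell (Input false) A None)).

Inductive write {A : Type} (r : Ref A) (s : memory) (v : A) : memory -> Prop :=
| write_internal (x : option A) :
    s (rid r) = Some (Cell Internal A x) ->
    write r s v (upd s (rid r) (Cell Internal A (Some v)))
| write_output :
    s (rid r) = Some (Cell (Output true) A None) ->
    write r s v (upd s (rid r) (Cell (Output false) A (Some v))).

(** step t x sigma = (y, sigma')  (graph of the partial function) *)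
Inductive step : forall {A B : Type}, RSF A B -> A -> memory -> B -> memory -> Prop :=
| step_arr {A B} (f : A -> B) x s : step (Arr f) x s (f x) s
| step_comp {A B C} (t1 : RSF A B) (t2 : RSF B C) x s y s' z s'' :
    step t1 x s y s' -> step t2 y s' z s'' -> step (Comp t1 t2) x s z s''
| step_first {A B C} (t : RSF A B) x (c : C) s y s' :
    step t x s y s' -> step (First (C:=C) t) (x, c) s (y, c) s'
| step_get {A B} (r : Ref B) (x : A) s y s' :
    read r s y s' -> step (Get (A:=A) r) x s (x, y) s'
| step_set {A B} (r : Ref B) (x : A) (y : B) s s' :
    write r s y s' -> step (SetR (A:=A) r) (x, y) s x s'.

Record program := Program {
  inputs    : list Type;
  internals : list {tau : Type & tau};
  outputs   : list Type;
  prog      : RSF unit unit }.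

Definition k_in p := length (inputs p).
Definition k_int p := length (internals p).
Definition k_out p := length (outputs p).

Definition is_input_idx p n := n < k_in p.
Definition is_internal_idx p n := k_in p <= n < k_in p + k_int p.
Definition is_output_idx p n := k_in p + k_int p <= n < k_in p + k_int p + k_out p.

Definition compat (ts : list Type) (l : list {tau : Type & tau}) : Prop :=
  List.map (@projT1 Type (fun tau => tau)) l = ts.

Definition init (p : program) : memory :=
  fun n =>
    if (k_in p <=? n) && (n <? k_in p + k_int p) then
      match nth_error (internals p) (n - k_in p) with
      | Some (existT _ tau v) => Some (Cell Internal tau (Some v))
      | None => None
      end
    else None.

Definition pull (p : program) (s : memory) (i : list {tau : Type & tau}) : memory :=
  fun n =>
    if n <? k_in p then
      match nth_error i n with
      | Some (existT _ tau v) => Some (Cell (Input true) tau (Some v))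
      | None => s n
      end
    else if (k_in p + k_int p <=? n) && (n <? k_in p + k_int p + k_out p) then
      match nth_error (outputs p) (n - (k_in p + k_int p)) with
      | Some tau => Some (Cell (Output true) tau None)
      | None => s n
      end
    else s n.

Definition push (p : program) (s : memory) : list {tau : Type & tau} :=
  flat_map (fun n =>
    match s n with
    | Some (Cell (Output false) tau (Some v)) => [existT (fun t => t) tau v]
    | _ => []
    end) (seq (k_in p + k_int p) (k_out p)).

(** [run_rel p s is os]: run p s is is (everywhere) defined and equals os. *)
CoInductive run_rel (p : program) (s : memory) :
  Stream (list {tau : Type & tau}) -> Stream (list {tau : Type & tau}) -> Prop :=
| run_cons i is s' os :
    step (prog p) tt (pull p s i) tt s' ->
    run_rel p s' is os ->
    run_rel p s (Cons i is) (Cons (push p s') os).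

Definition amemory := nat -> option (status * Type).

Inductive readT {A : Type} (r : Ref A) (S : amemory) : amemory -> Prop :=
| readT_internal : S (rid r) = Some (Internal, A) -> readT r S S
| readT_input : S (rid r) = Some (Input true, A) ->
    readT r S (upd S (rid r) (Input false, A)).

Inductive writeT {A : Type} (r : Ref A) (S : amemory) : amemory -> Prop :=
| writeT_internal : S (rid r) = Some (Internal, A) -> writeT r S S
| writeT_output : S (rid r) = Some (Output true, A) ->
    writeT r S (upd S (rid r) (Output false, A)).

Inductive stepT : forall {A B : Type}, RSF A B -> amemory -> amemory -> Prop :=
| stepT_arr {A B} (f : A -> B) S : stepT (Arr f) S S
| stepT_comp {A B C} (t1 : RSF A B) (t2 : RSF B C) S S' S'' :
    stepT t1 S S' -> stepT t2 S' S'' -> stepT (Comp t1 t2) S S''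
| stepT_first {A B C} (t : RSF A B) S S' :
    stepT t S S' -> stepT (First (C:=C) t) S S'
| stepT_get {A B} (r : Ref B) S S' : readT r S S' -> stepT (Get (A:=A) r) S S'
| stepT_set {A B} (r : Ref B) S S' : writeT r S S' -> stepT (SetR (A:=A) r) S S'.

Definition initT (p : program) : amemory :=
  fun n =>
    if n <? k_in p then
      match nth_error (inputs p) n with Some tau => Some (Input true, tau) | None => None end
    else if n <? k_in p + k_int p then
      match nth_error (internals p) (n - k_in p) with
      | Some (existT _ tau _) => Some (Internal, tau) | None => None end
    else if n <? k_in p + k_int p + k_out p then
      match nth_error (outputs p) (n - (k_in p + k_int p)) with
      | Some tau => Some (Output true, tau) | None => None end
    else None.

Definition well_typed (p : program) : Prop :=
  exists S, stepT (prog p) (initT p) S /\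
    (forall n, is_input_idx p n -> exists tau, S n = Some (Input false, tau)) /\
    (forall n, is_output_idx p n -> exists tau, S n = Some (Output false, tau)).

(* Main.v *)
Require Import Defs.
From Stdlib Require Import List Streams.
From Stdlib Require Import Arith Lia Bool ClassicalEpsilon.
Import ListNotations.

Definition abs (s : memory) : amemory := fun n =>
  match s n with Some c => Some (cstatus c, ctype c) | None => None end.

Definition Good (s : memory) : Prop := forall n c, s n = Some c ->
  match cstatus c with
  | Internal | Input true | Output false => cval c <> None
  | Output true => cval c = None
  | Input false => True end.

Definition step_inv {A B} (t : RSF A B) : A -> memory -> B -> memory -> Prop :=
 match t in RSF A B return A -> memory -> B -> memory -> Prop with
 | Arr f => fun x s y s' => y = f x /\ s' = s
 | Comp t1 t2 => fun x s z s'' => exists y s', step t1 x s y s' /\ step t2 y s' z s''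
 | First t => fun xc s yc s' => step t (fst xc) s (fst yc) s' /\ snd yc = snd xc
 | Get r => fun x s xy s' => fst xy = x /\ read r s (snd xy) s'
 | SetR r => fun xy s x s' => x = fst xy /\ write r s (snd xy) s'
 end.

Lemma step_invP {A B} (t : RSF A B) x s y s' : step t x s y s' -> step_inv t x s y s'.
Proof. destruct 1; simpl; eauto. Qed.

Definition stepT_inv {A B} (t : RSF A B) : amemory -> amemory -> Prop :=
 match t with
 | Arr _ => fun S S' => S' = S
 | Comp t1 t2 => fun S S' => exists S1, stepT t1 S S1 /\ stepT t2 S1 S'
 | First t => fun S S' => stepT t S S'
 | Get r => fun S S' => readT r S S'
 | SetR r => fun S S' => writeT r S S'
 end.

Lemma stepT_invP {A B} (t : RSF A B) S S' : stepT t S S' -> stepT_inv t S S'.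
Proof. destruct 1; simpl; eauto. Qed.

Lemma abs_upd s n c k : abs (upd s n c) k =
  if Nat.eqb k n then Some (cstatus c, ctype c) else abs s k.
Proof. unfold abs, upd. destruct (Nat.eqb k n); auto. Qed.

Lemma Good_upd s n c : Good s ->
  match cstatus c with
  | Internal | Input true | Output false => cval c <> None
  | Output true => cval c = None
  | Input false => True end -> Good (upd s n c).
Proof.
  intros G H k c' E. unfold upd in E. destruct (Nat.eqb k n).
  - inversion E; subst; auto.
  - eapply G; eauto.
Qed.

Lemma preservation {A B} (t : RSF A B) x s y s' :
  step t x s y s' -> forall S S', (forall n, abs s n = S n) -> stepT t S S' -> Good s ->
  (forall n, abs s' n = S' n) /\ Good s'.
Proof.
  induction 1; intros S0 S' HA HT G; apply stepT_invP in HT; simpl in HT.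
  - subst; auto.
  - destruct HT as [S1 [T1 T2]].
    destruct (IHstep1 _ _ HA T1 G) as [HA1 G1]. eauto.
  - eauto.
  - destruct H as [y E | y E]; destruct HT as [E' | E'];
      rewrite <- HA in E'; unfold abs in E'; rewrite E in E'; simpl in E';
      try discriminate; split; auto.
    + intro n. rewrite abs_upd. unfold upd. destruct (Nat.eqb n (rid r)); auto.
    + apply Good_upd; simpl; auto.
  - destruct H as [v E | E]; destruct HT as [E' | E'];
      rewrite <- HA in E'; unfold abs in E'; rewrite E in E'; simpl in E';
      try discriminate; split; auto.
    + intro n. rewrite abs_upd, <- HA. unfold abs at 2. 
      destruct (Nat.eqb_spec n (rid r)); subst; auto. rewrite E. reflexivity.
    + apply Good_upd; simpl; auto. discriminate.
    + intro n. rewrite abs_upd. unfold upd. destruct (Nat.eqb n (rid r)); auto.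
    + apply Good_upd; simpl; auto. discriminate.
Qed.

Lemma progress {A B} (t : RSF A B) S S' : stepT t S S' ->
  forall s, (forall n, abs s n = S n) -> Good s -> forall x, exists y s', step t x s y s'.
Proof.
  induction 1; intros s HA G x.
  - eexists; eexists; constructor.
  - destruct (IHstepT1 s HA G x) as [y [s1 H1]].
    destruct (preservation _ _ _ _ _ H1 _ _ HA H G) as [HA1 G1].
    destruct (IHstepT2 s1 HA1 G1 y) as [z [s2 H2]].
    exists z, s2. econstructor; eauto.
  - destruct x as [x c]. destruct (IHstepT s HA G x) as [y [s1 H1]].
    exists (y, c), s1. constructor; auto.
  - assert (HA' := HA (rid r)). unfold abs in HA'.
    destruct (s (rid r)) as [[st T v]|] eqn:E; simpl in HA';
      destruct H as [E'|E']; rewrite E' in HA'; try discriminate;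
      injection HA' as -> ->; specialize (G _ _ E); simpl in G;
      destruct v as [v|]; try (exfalso; apply G; reflexivity).
    + exists (x, v). eexists. constructor. apply read_internal. exact E.
    + exists (x, v). eexists. constructor. apply read_input. exact E.
  - destruct x as [x y].
    assert (HA' := HA (rid r)). unfold abs in HA'.
    destruct (s (rid r)) as [[st T v]|] eqn:E; simpl in HA';
      destruct H as [E'|E']; rewrite E' in HA'; try discriminate;
      injection HA' as -> ->; specialize (G _ _ E); simpl in G.
    + exists x. eexists. constructor. eapply write_internal. exact E.
    + subst v. exists x. eexists. constructor. apply write_output. exact E.
Qed.

Definition tyof (o : option (status * Type)) : option Type :=
  match o with Some (_, T) => Some T | None => None end.

Lemma stepT_ty {A B} (t : RSF A B) S S' : stepT t S S' ->
  forall n, tyof (S' n) = tyof (S n).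
Proof.
  induction 1; intro n; auto.
  - rewrite IHstepT2; auto.
  - destruct H; auto. unfold upd. destruct (Nat.eqb_spec n (rid r)); subst; auto.
    rewrite H; reflexivity.
  - destruct H; auto. unfold upd. destruct (Nat.eqb_spec n (rid r)); subst; auto.
    rewrite H; reflexivity.
Qed.

Lemma stepT_int {A B} (t : RSF A B) S S' : stepT t S S' ->
  forall n T, S n = Some (Internal, T) -> S' n = Some (Internal, T).
Proof.
  induction 1; intros n T E; auto.
  - destruct H; auto. unfold upd. destruct (Nat.eqb_spec n (rid r)); subst; auto.
    rewrite H in E; discriminate.
  - destruct H; auto. unfold upd. destruct (Nat.eqb_spec n (rid r)); subst; auto.
    rewrite H in E; discriminate.
Qed.

Section Main.
Variable p : program.

Definition Inv (s : memory) : Prop := Good s /\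
  forall n, ~ n < k_in p -> ~ is_output_idx p n -> abs s n = initT p n.

Lemma nth_error_some {X} (l : list X) n : n < length l -> exists x, nth_error l n = Some x.
Proof.
  intro H. destruct (nth_error l n) eqn:E; eauto.
  apply nth_error_None in E. lia.
Qed.

Lemma pull_ok s i : Inv s -> compat (inputs p) i ->
  Good (pull p s i) /\ forall n, abs (pull p s i) n = initT p n.
Proof.
  intros [G HI] C. unfold compat in C.
  assert (Hlen : length i = k_in p) by (unfold k_in; rewrite <- C, length_map; auto).
  split.
  - intros n c E. unfold pull in E.
    destruct (Nat.ltb_spec n (k_in p)).
    + destruct (nth_error_some i n) as [[tau v] Ei]; [lia|]. rewrite Ei in E.
      inversion E; subst; simpl; discriminate.
    + destruct ((k_in p + k_int p <=? n) && (n <? k_in p + k_int p + k_out p)).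
      * destruct (nth_error (outputs p) _); [inversion E; subst; simpl; auto|].
        eapply G; eauto.
      * eapply G; eauto.
  - intro n. unfold abs, pull.
    destruct (Nat.ltb_spec n (k_in p)).
    + destruct (nth_error_some i n) as [[tau v] Ei]; [lia|]. rewrite Ei.
      unfold initT. destruct (Nat.ltb_spec n (k_in p)); [|lia].
      rewrite <- C, nth_error_map, Ei. reflexivity.
    + destruct (Nat.leb_spec (k_in p + k_int p) n);
      destruct (Nat.ltb_spec n (k_in p + k_int p + k_out p)); simpl.
      * destruct (nth_error_some (outputs p) (n - (k_in p + k_int p))) as [tau Eo];
          [unfold k_out in *; lia|]. rewrite Eo.
        unfold initT. destruct (Nat.ltb_spec n (k_in p)); [lia|].
        destruct (Nat.ltb_spec n (k_in p + k_int p)); [lia|].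
        destruct (Nat.ltb_spec n (k_in p + k_int p + k_out p)); [|lia]. rewrite Eo; reflexivity.
      * apply HI; [lia|unfold is_output_idx; lia].
      * apply HI; [lia|unfold is_output_idx; lia].
      * apply HI; [lia|unfold is_output_idx; lia].
Qed.

Lemma map_nth_seq (outs : list Type) a :
  List.map (fun n => nth (n - a) outs unit) (seq a (length outs)) = outs.
Proof.
  revert a; induction outs as [|x outs IH]; intro a; simpl; auto.
  rewrite Nat.sub_diag. f_equal. rewrite <- (IH (S a)) at 2.
  apply map_ext_in. intros n Hn. apply in_seq in Hn.
  replace (n - a) with (S (n - S a)) by lia. reflexivity.
Qed.

Lemma flat_map_types (f : nat -> list {tau : Type & tau}) (g : nat -> Type) l :
  (forall n, In n l -> List.map (@projT1 Type (fun tau => tau)) (f n) = [g n]) ->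
  List.map (@projT1 Type (fun tau => tau)) (flat_map f l) = List.map g l.
Proof.
  induction l as [|a l IH]; intro H; simpl; auto.
  rewrite map_app, H by (left; auto). simpl. f_equal. apply IH. intros; apply H; right; auto.
Qed.

Lemma step_ok s i : Inv s -> compat (inputs p) i -> well_typed p ->
  (exists s', step (prog p) tt (pull p s i) tt s') /\
  forall s', step (prog p) tt (pull p s i) tt s' -> Inv s' /\ compat (outputs p) (push p s').
Proof.
  intros HI C [S [HT [Hin Hout]]].
  destruct (pull_ok s i HI C) as [G HA].
  split.
  - destruct (progress _ _ _ HT _ HA G tt) as [y [s' H]]. destruct y. eauto.
  - intros s' H. destruct (preservation _ _ _ _ _ H _ _ HA HT G) as [HA' G'].
    split; [split; auto|].
    + intros n H1 H2. rewrite HA'.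
      unfold initT in *. destruct (Nat.ltb_spec n (k_in p)); [lia|].
      destruct (Nat.ltb_spec n (k_in p + k_int p)).
      * destruct (nth_error (internals p) (n - k_in p)) as [[tau v]|] eqn:E.
        -- apply (stepT_int _ _ _ HT). unfold initT.
           destruct (Nat.ltb_spec n (k_in p)); [lia|].
           destruct (Nat.ltb_spec n (k_in p + k_int p)); [|lia]. rewrite E; auto.
        -- pose proof (stepT_ty _ _ _ HT n) as TY. unfold initT in TY.
           destruct (Nat.ltb_spec n (k_in p)); [lia|].
           destruct (Nat.ltb_spec n (k_in p + k_int p)); [|lia]. rewrite E in TY.
           destruct (S n) as [[]|]; simpl in TY; congruence.
      * destruct (Nat.ltb_spec n (k_in p + k_int p + k_out p)).
        { exfalso; apply H2; unfold is_output_idx; lia. }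
        pose proof (stepT_ty _ _ _ HT n) as TY. unfold initT in TY.
        destruct (Nat.ltb_spec n (k_in p)); [lia|].
        destruct (Nat.ltb_spec n (k_in p + k_int p)); [lia|].
        destruct (Nat.ltb_spec n (k_in p + k_int p + k_out p)); [lia|].
        destruct (S n) as [[]|]; simpl in TY; congruence.
    + unfold compat, push.
      rewrite (flat_map_types _ (fun n => nth (n - (k_in p + k_int p)) (outputs p) unit)).
      * unfold k_out. apply map_nth_seq.
      * intros n Hn. apply in_seq in Hn.
        destruct (Hout n) as [tau Et]; [unfold is_output_idx; lia|].
        pose proof (stepT_ty _ _ _ HT n) as TY. unfold initT in TY.
        destruct (Nat.ltb_spec n (k_in p)); [lia|].
        destruct (Nat.ltb_spec n (k_in p + k_int p)); [lia|].
        destruct (Nat.ltb_spec n (k_in p + k_int p + k_out p)); [|lia].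
        destruct (nth_error_some (outputs p) (n - (k_in p + k_int p))) as [tau' Eo];
          [unfold k_out in *; lia|]. rewrite Eo, Et in TY. simpl in TY.
        injection TY as ->.
        rewrite (nth_error_nth _ _ _ Eo).
        specialize (HA' n). rewrite Et in HA'. unfold abs in HA'.
        destruct (s' n) as [[st T v]|] eqn:E; [|discriminate].
        simpl in HA'. injection HA' as -> ->.
        specialize (G' _ _ E). simpl in G'.
        destruct v as [v|]; [|exfalso; apply G'; auto]. simpl. reflexivity.
Qed.

Definition nxt (s : memory) (i : list {tau : Type & tau}) : memory :=
  epsilon (inhabits s) (fun s' => step (prog p) tt (pull p s i) tt s').

CoFixpoint runS (s : memory) (is : Stream (list {tau : Type & tau})) :
  Stream (list {tau : Type & tau}) :=
  match is with Cons i is' => Cons (push p (nxt s i)) (runS (nxt s i) is') end.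

Lemma runS_eq s i is : runS s (Cons i is) = Cons (push p (nxt s i)) (runS (nxt s i) is).
Proof. rewrite (unfold_Stream (runS s (Cons i is))). reflexivity. Qed.

Lemma nxt_ok s i : Inv s -> compat (inputs p) i -> well_typed p ->
  step (prog p) tt (pull p s i) tt (nxt s i) /\ Inv (nxt s i) /\
  compat (outputs p) (push p (nxt s i)).
Proof.
  intros HI C W. destruct (step_ok s i HI C W) as [Ex H].
  assert (Hs : step (prog p) tt (pull p s i) tt (nxt s i)) by (unfold nxt; apply epsilon_spec; auto).
  split; auto.
Qed.

Lemma run_ok : well_typed p -> forall s is os, Inv s ->
  ForAll (fun s => compat (inputs p) (hd s)) is -> os = runS s is ->
  run_rel p s is os.
Proof.
  intro W. cofix CH. intros s is os HI HF E.
  destruct is as [i is']. rewrite runS_eq in E. subst os.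
  inversion HF as [H0 H1]. simpl in H0.
  destruct (nxt_ok s i HI H0 W) as [Hs [HI' _]].
  apply run_cons; [exact Hs|]. simpl in H1. exact (CH _ _ _ HI' H1 eq_refl).
Qed.

Lemma out_ok : well_typed p -> forall s is os, Inv s ->
  ForAll (fun s => compat (inputs p) (hd s)) is -> os = runS s is ->
  ForAll (fun s => compat (outputs p) (hd s)) os.
Proof.
  intro W. cofix CH. intros s is os HI HF E.
  destruct is as [i is']. rewrite runS_eq in E. subst os.
  inversion HF as [H0 H1]. simpl in H0.
  destruct (nxt_ok s i HI H0 W) as [Hs [HI' Hc]].
  constructor; [exact Hc|]. simpl in H1. simpl. exact (CH _ _ _ HI' H1 eq_refl).
Qed.

Lemma init_inv : Inv (init p).
Proof.
  split.
  - intros n c E. unfold init in E.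
    destruct (_ && _); [|discriminate].
    destruct (nth_error _ _) as [[tau v]|]; inversion E; subst; simpl; discriminate.
  - intros n H1 H2. unfold abs, init, initT.
    destruct (Nat.ltb_spec n (k_in p)); [lia|].
    destruct (Nat.leb_spec (k_in p) n); [|lia].
    destruct (Nat.ltb_spec n (k_in p + k_int p)); simpl.
    + destruct (nth_error _ _) as [[tau v]|]; reflexivity.
    + destruct (Nat.ltb_spec n (k_in p + k_int p + k_out p)); auto.
      exfalso; apply H2; unfold is_output_idx; lia.
Qed.

End Main.

Theorem corollary1 (p : program) (is : Stream (list {tau : Type & tau})) :
  well_typed p ->
  ForAll (fun s => compat (inputs p) (hd s)) is ->
  exists os, run_rel p (init p) is os /\
             ForAll (fun s => compat (outputs p) (hd s)) os.
Proof.
  intros W HF. exists (runS p (init p) is). split.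
  - eapply run_ok; eauto using init_inv.
  - eapply out_ok; eauto using init_inv.
Qed.
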